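(* For every pair of positive integers $n,d$ there exist an integer $N=N(n,d)$ and a pointed hypersurface $(p,Y)$ of degree $d$ in $\mathbb{P}^N$ such that every member of $\mathcal{U}_{n,d}$ is a parameterized linear section of $(p,Y)$. Furthermore, for every $(q,X)\in\mathcal{U}_{n,d}$ there exists a parameterized $n$-dimensional linear space $\Lambda\in\mathcal{G}_p(n,N)$ with $\phi_n(\Lambda)=(q,X)$ such that the induced map on tangent spaces $d\phi_n: T_\Lambda\mathcal{G}_p(n,N)\to T_{(q,X)}\mathcal{U}_{n,d}$ is surjective.
   Context: $\mathcal{U}_{n,d}$ is the universal hypersurface of degree $d$ in $\mathbb{P}^n$: the variety of pairs $(q,X)$ (''pointed hypersurfaces'') where $X\subset\mathbb{P}^n$ is a hypersurface of degree $d$ and $q\in X$. A parameterized linear space of dimension $r$ in $\mathbb{P}^N$ is a linear embedding $f:\mathbb{P}^r\to\mathbb{P}^N$; $\mathcal{G}_p(r,N)$ denotes the space of parameterized $r$-dimensional linear spaces in $\mathbb{P}^N$ whose image contains $p$. For a pointed hypersurface $(p,Y)$ in $\mathbb{P}^N$ and $f\in\mathcal{G}_p(r,N)$ whose image is not contained in $Y$, the parameterized linear section of $(p,Y)$ by $f$ is $(f^{-1}(p),f^{-1}(Y))\in\mathcal{U}_{r,d}$. This defines the rational map $\phi_r:\mathcal{G}_p(r,N)\dashrightarrow\mathcal{U}_{r,d}$. *)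

(* Defs.v *)
From HB Require Import structures.
From mathcomp Require Import all_boot all_order all_algebra.
From mathcomp Require Import mpoly.
Set Implicit Arguments. Unset Strict Implicit. Unset Printing Implicit Defensive.
Import Order.TTheory GRing.Theory.
Local Open Scope ring_scope.

(* Conventions: a point of P^n is represented by a nonzero column vector in
   K^(n+1) (up to nonzero scalars); a hypersurface of degree d in P^n by a
   nonzero homogeneous polynomial of degree d in n+1 variables (up to nonzero
   scalars), i.e. a point of P(S_d).  A parameterized linear space
   f : P^r -> P^N is an injective (N+1)x(r+1) matrix (up to scalars). *)

Section Defs.
Variable K : fieldType.

Definition pev (k : nat) (F : {mpoly K[k]}) (v : 'cV[K]_k) : K :=
  F.@[fun i => v i 0].

Definition linforms (m k : nat) (A : 'M[K]_(m, k)) : m.-tuple {mpoly K[k]} :=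
  [tuple \sum_(j < k) A i j *: 'X_j | i < m].

Definition pullback (m k : nat) (F : {mpoly K[m]}) (A : 'M[K]_(m, k)) :=
  F \mPo linforms A.

(* d/de F((A + e B) x) at e = 0, i.e. sum_i (d_i F)(A x) * (B x)_i *)
Definition dpullback (m k : nat) (F : {mpoly K[m]}) (A B : 'M[K]_(m, k)) :
  {mpoly K[k]} :=
  \sum_(i < m) (pullback (F^`M(i)) A * tnth (linforms B) i).

Definition pointed_hypersurface (k d : nat) (q : 'cV[K]_k) (F : {mpoly K[k]}) :=
  [/\ q != 0, F != 0, F \is d.-homog & pev F q = 0].

Definition param_linear (m k : nat) (A : 'M[K]_(m, k)) := \rank A = k.

(* (q, G) is the parameterized linear section of (p, Y) by A:
   A is a linear embedding, its image is not contained in Y,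
   f^{-1}(p) = q (so p lies in the image) and f^{-1}(Y) = G. *)
Definition is_param_section (m k : nat) (p : 'cV[K]_m) (Y : {mpoly K[m]})
    (A : 'M[K]_(m, k)) (q : 'cV[K]_k) (G : {mpoly K[k]}) :=
  [/\ param_linear A, pullback Y A != 0,
      exists2 l : K, l != 0 & A *m q = l *: p
    & exists2 mu : K, mu != 0 & pullback Y A = mu *: G].

(* Surjectivity of d(phi_r) at A : T_A G_p(r,N) -> T_{(q,G)} U_{r,d}, with
   Zariski tangent spaces described by first-order deformations
   (K[e]/(e^2)-points).  A tangent vector to U_{r,d} at (q,G) is a pair
   (q', G') with G' homogeneous of degree d and
   (G + e G')(q + e q') = 0 mod e^2, modulo (q, G).  It is in the image of
   d phi iff some first-order deformation A + e B of A satisfies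
   (A + e B)(q + e q') = (l + e l') p   and
   Y o (A + e B) = (mu + e mu') (G + e G')   mod e^2
   (in particular p stays in the image of A + e B, i.e. A + e B is a tangent
   vector of G_p(r,N)). *)
Definition dphi_surjective (m k d : nat) (p : 'cV[K]_m) (Y : {mpoly K[m]})
    (A : 'M[K]_(m, k)) (q : 'cV[K]_k) (G : {mpoly K[k]}) :=
  forall (l mu : K), A *m q = l *: p -> pullback Y A = mu *: G ->
  forall (q' : 'cV[K]_k) (G' : {mpoly K[k]}),
    G' \is d.-homog ->
    pev G' q + \sum_(i < k) pev (G^`M(i)) q * q' i 0 = 0 ->
    exists (B : 'M[K]_(m, k)) (l' mu' : K),
      A *m q' + B *m q = l' *: p /\
      dpullback Y A B = mu' *: G + mu *: G'.

End Defs.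

(* Main.v *)
Require Import Defs.
From HB Require Import structures.
From mathcomp Require Import all_boot all_order all_algebra.
From mathcomp Require Import mpoly.
From mathcomp Require Import ring.
Import GRing.Theory.
Local Open Scope ring_scope.
Set Implicit Arguments. Unset Strict Implicit. Unset Printing Implicit Defensive.

Section Generic.
Variable K : fieldType.
Variable n : nat.
Implicit Types (F G : {mpoly K[n]}).

Lemma mderivXU (i r : 'I_n) : ('X_i : {mpoly K[n]})^`M(r) = ((i == r)%:R)%:MP.
Proof.
rewrite mderivX mnm1E; case: eqP => [->|_].
  have -> : (U_(r) - U_(r))%MM = 0%MM by apply/mnmP => j; rewrite mnmBE mnm0E subnn.
  by rewrite mpolyX0 scale1r mpolyC1.
by rewrite scale0r mpolyC0.
Qed.

Definition lf (rho : 'I_n -> K) : {mpoly K[n]} := \sum_k rho k *: 'X_k.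
Definition ev (rho : 'I_n -> K) (v : 'cV[K]_n) : K := \sum_k rho k * v k 0.

Lemma pev_lf rho v : pev (lf rho) v = ev rho v.
Proof.
rewrite /pev /lf /ev raddf_sum; apply: eq_bigr => k _ /=.
by rewrite mevalZ mevalXU.
Qed.

Lemma mderiv_lf rho r : (lf rho)^`M(r) = (rho r)%:MP.
Proof.
rewrite /lf raddf_sum (bigD1 r) //= big1 ?addr0.
  by rewrite mderivZ mderivXU eqxx -mul_mpolyC mpolyC1 mulr1.
by move=> k /negbTE kr; rewrite mderivZ mderivXU kr mpolyC0 scaler0.
Qed.

Lemma lf_homog rho : lf rho \is 1.-homog.
Proof.
rewrite /lf; apply: rpred_sum => k _; apply: rpredZ.
by rewrite dhomogX /= mdeg1.
Qed.

Lemma lf_delta i : lf (fun k => (k == i)%:R) = 'X_i.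
Proof.
rewrite /lf (bigD1 i) //= big1 ?addr0 ?eqxx ?scale1r //.
by move=> k /negbTE ->; rewrite scale0r.
Qed.

Lemma lf_lin a b rho sig : lf (fun k => a * rho k + b * sig k) = a *: lf rho + b *: lf sig.
Proof.
rewrite /lf !scaler_sumr -big_split /=; apply: eq_bigr => k _.
by rewrite scalerDl !scalerA.
Qed.

Lemma lf_scale a rho : lf (fun k => a * rho k) = a *: lf rho.
Proof.
rewrite /lf !scaler_sumr; apply: eq_bigr => k _.
by rewrite scalerA.
Qed.

Lemma ev_lin a b rho sig v : ev (fun k => a * rho k + b * sig k) v = a * ev rho v + b * ev sig v.
Proof.
rewrite /ev !mulr_sumr -big_split /=; apply: eq_bigr => k _.
by rewrite mulrDl !mulrA.
Qed.

Lemma ev_scale a rho v : ev (fun k => a * rho k) v = a * ev rho v.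
Proof. by rewrite /ev mulr_sumr; apply: eq_bigr => k _; rewrite mulrA. Qed.

Lemma mderiv_prod_seq (I : eqType) (s : seq I) (Fs : I -> {mpoly K[n]}) r :
  uniq s ->
  (\prod_(i <- s) Fs i)^`M(r) =
  \sum_(i <- s) (Fs i)^`M(r) * \prod_(i' <- s | i' != i) Fs i'.
Proof.
elim: s => [|x s IH] /=; first by rewrite !big_nil mderivC.
case/andP=> xs us; rewrite !big_cons mderivM IH // eqxx /=.
congr (_ + _).
  congr (_ * _); rewrite big_seq_cond [RHS]big_seq_cond; apply: eq_bigl => i.
  by case: (boolP (i \in s)) => //= his; apply/esym/negP => /eqP ei; rewrite -ei his in xs.
rewrite mulr_sumr [LHS]big_seq [RHS]big_seq; apply: eq_bigr => i his.
rewrite big_cons.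
have -> : (x != i) by apply/negP => /eqP ei; rewrite ei his in xs.
by rewrite mulrCA.
Qed.

Lemma mderiv_prod (I : finType) (Fs : I -> {mpoly K[n]}) r :
  (\prod_i Fs i)^`M(r) = \sum_i (Fs i)^`M(r) * \prod_(i' | i' != i) Fs i'.
Proof. by rewrite mderiv_prod_seq // index_enum_uniq. Qed.

Lemma prod_homog_seq (I : Type) (s : seq I) (Fs : I -> {mpoly K[n]}) :
  (forall i, Fs i \is 1.-homog) -> \prod_(i <- s) Fs i \is (size s).-homog.
Proof.
move=> H; elim: s => [|x s IH] /=; first by rewrite big_nil dhomog1.
by rewrite big_cons -add1n; apply: dhomogM.
Qed.

Lemma prod_homog (d : nat) (Fs : 'I_d -> {mpoly K[n]}) :
  (forall i, Fs i \is 1.-homog) -> \prod_i Fs i \is d.-homog.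
Proof.
move=> H; have := prod_homog_seq (index_enum 'I_d) H.
by rewrite /index_enum /= -enumT size_enum_ord.
Qed.


Lemma mono_prod (i0 : 'I_n) (m : 'X_{1..n}) :
  exists s : nat -> 'I_n, ('X_[m] : {mpoly K[n]}) = \prod_(j < mdeg m) 'X_(s j).
Proof.
set s := flatten [seq nseq (m i) i | i <- enum 'I_n].
exists (nth i0 s).
have ss : size s = mdeg m.
  rewrite size_flatten /shape -map_comp sumnE big_map mdegE big_enum.
  by apply: eq_bigr => i _ /=; rewrite size_nseq.
have -> : ('X_[m] : {mpoly K[n]}) = \prod_(x <- s) 'X_x.
  rewrite mpolyXE_id big_flatten big_map big_enum; apply: eq_bigr => i _.
  by rewrite big_nseq iter_mulr_1.
by rewrite (big_nth i0) big_mkord ss.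
Qed.

End Generic.

Lemma meval_lf (K : fieldType) n (rho : 'I_n -> K) (v : 'cV[K]_n) :
  (lf rho).@[fun i => v i 0] = ev rho v.
Proof. exact: pev_lf. Qed.

Lemma ev_delta (K : fieldType) n (i : 'I_n) (v : 'cV[K]_n) :
  ev (fun k => (k == i)%:R) v = v i 0.
Proof.
rewrite /ev (bigD1 i) //= big1 ?addr0 ?eqxx ?mul1r //.
by move=> k /negbTE ->; rewrite mul0r.
Qed.

Section Rep.
Variables (K : fieldType) (n1 d : nat) (q : 'cV[K]_n1) (c : 'I_n1).
Hypothesis hc : q c 0 != 0.

Definition Wv : 'I_n1 -> K := fun k => (q c 0)^-1 * (k == c)%:R.
Definition Zv (i : 'I_n1) : 'I_n1 -> K :=
  fun k => 1 * (k == i)%:R + (- (q i 0 / q c 0)) * (k == c)%:R.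

Lemma ev_Wv : ev Wv q = 1.
Proof. by rewrite /Wv ev_scale ev_delta mulVf. Qed.

Lemma ev_Zv i : ev (Zv i) q = 0.
Proof. rewrite /Zv ev_lin !ev_delta; field; exact: hc. Qed.

Lemma Xdec i : 'X_i = lf (Zv i) + q i 0 *: lf Wv.
Proof.
rewrite /Zv /Wv lf_lin lf_scale !lf_delta scale1r scalerA -addrA.
by rewrite scaleNr addNr addr0.
Qed.

Definition Blk := ({ffun 'I_d -> bool} * {ffun 'I_d -> 'I_n1})%type.
Definition ne (b : Blk) : bool := [exists j, b.1 j].
Definition Pb (b : Blk) : {mpoly K[n1]} :=
  \prod_(j < d) (if b.1 j then lf (Zv (b.2 j)) else lf Wv).

Lemma pev_Pb b : pev (Pb b) q = (~~ ne b)%:R.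
Proof.
rewrite /pev /Pb rmorph_prod /=.
rewrite (eq_bigr (fun j => if b.1 j then 0 else 1)); last first.
  by move=> j _; case: (b.1 j); rewrite meval_lf ?ev_Zv ?ev_Wv.
rewrite /ne; case: existsP => [[j bj]|nb] /=.
  by rewrite (bigD1 j) //= bj mul0r.
rewrite big1 // => j _; case: ifP => // bj; case: nb; by exists j.
Qed.

Lemma rep F : F \is d.-homog -> pev F q = 0 ->
  exists a : Blk -> K, F = \sum_(b | ne b) a b *: Pb b.
Proof.
move=> hF hq.
pose inV P := exists a : Blk -> K, P = \sum_b a b *: Pb b.
have V0 : inV 0 by exists (fun _ => 0); rewrite big1 // => b _; rewrite scale0r.
have VD : forall P Q, inV P -> inV Q -> inV (P + Q).
  move=> P Q [a ->] [a' ->]; exists (fun b => a b + a' b).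
  by rewrite -big_split; apply: eq_bigr => b _; rewrite scalerDl.
have VZ : forall x P, inV P -> inV (x *: P).
  move=> x P [a ->]; exists (fun b => x * a b).
  by rewrite scaler_sumr; apply: eq_bigr => b _; rewrite scalerA.
have VP : forall b0, inV (Pb b0).
  move=> b0; exists (fun b => (b == b0)%:R).
  rewrite (bigD1 b0) //= big1 ?addr0 ?eqxx ?scale1r // => b /negbTE ->.
  by rewrite scale0r.
have Vs : forall s : 'I_d -> 'I_n1, inV (\prod_j 'X_(s j)).
  move=> s.
  rewrite (eq_bigr (fun j => \sum_(β : bool)
     (if β then lf (Zv (s j)) else q (s j) 0 *: lf Wv))); last first.
    by move=> j _; rewrite big_bool /= -Xdec.
  rewrite bigA_distr_bigA /=; apply: (big_ind inV V0 VD) => f _.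
  have -> : \prod_j (if f j then lf (Zv (s j)) else q (s j) 0 *: lf Wv) =
     (\prod_j (if f j then 1 else q (s j) 0)) *: Pb (f, [ffun j => s j]).
    rewrite /Pb -scaler_prod; apply: eq_bigr => j _ /=; rewrite ffunE.
    by case: (f j); rewrite ?scale1r.
  by apply: VZ; apply: VP.
have VF : inV F.
  rewrite (mpolyE F) big_seq; apply: (big_ind inV V0 VD) => m hm.
  apply: VZ; have [s ->] := mono_prod K c m.
  rewrite (dhomog_mf hF hm).
  exact: (Vs (fun j : 'I_d => s j)).
case: VF => a Fa; exists a.
have hq' : \sum_(b | ~~ ne b) a b = 0.
  rewrite -[RHS]hq Fa /pev rmorph_sum /= [RHS](bigID ne) /=.
  rewrite [X in _ = X + _]big1 ?add0r; last first.
    move=> b nb; rewrite mevalZ; have := pev_Pb b; rewrite /pev => ->.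
    by rewrite nb mulr0.
  apply: eq_bigr => b nb; rewrite mevalZ; have := pev_Pb b; rewrite /pev => ->.
  by rewrite nb mulr1.
rewrite {1}Fa (bigID ne) /=.
rewrite [X in _ + X](eq_bigr (fun b => a b *: \prod_(j < d) lf Wv)); last first.
  move=> b nb; congr (_ *: _); apply: eq_bigr => j _.
  by case: ifP => // bj; move: nb; rewrite /ne; move/existsPn/(_ j); rewrite bj.
by rewrite -scaler_suml hq' scale0r addr0.
Qed.

End Rep.

Lemma lf_ext (K : fieldType) n (rho sig : 'I_n -> K) : rho =1 sig -> lf rho = lf sig.
Proof. by move=> e; apply: eq_bigr => k _; rewrite e. Qed.

Lemma ev_ext (K : fieldType) n (rho sig : 'I_n -> K) v : rho =1 sig -> ev rho v = ev sig v.
Proof. by move=> e; apply: eq_bigr => k _; rewrite e. Qed.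

Lemma tnth_lin (K : fieldType) m k (A : 'M[K]_(m, k)) r :
  tnth (linforms A) r = lf (fun j => A r j).
Proof. by rewrite /linforms tnth_mktuple. Qed.

Lemma pullbackX (K : fieldType) m k (A : 'M[K]_(m, k)) r :
  pullback 'X_r A = lf (fun j => A r j).
Proof. by rewrite /pullback comp_mpolyXU -tnth_nth tnth_lin. Qed.

Lemma pullback_prod (K : fieldType) m k (A : 'M[K]_(m, k)) (I : finType)
  (F : I -> {mpoly K[m]}) :
  pullback (\prod_i F i) A = \prod_i pullback (F i) A.
Proof.
have hm := comp_mpoly_is_multiplicative (linforms A).
exact: (big_morph _ hm.1 hm.2).
Qed.

Lemma pev_sum (K : fieldType) n (I : Type) (r : seq I) (P : pred I) (F : I -> {mpoly K[n]}) v :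
  pev (\sum_(i <- r | P i) F i) v = \sum_(i <- r | P i) pev (F i) v.
Proof. by rewrite /pev rmorph_sum. Qed.

Lemma pev_prod (K : fieldType) n (I : Type) (r : seq I) (P : pred I) (F : I -> {mpoly K[n]}) v :
  pev (\prod_(i <- r | P i) F i) v = \prod_(i <- r | P i) pev (F i) v.
Proof. by rewrite /pev rmorph_prod. Qed.

Lemma pevM (K : fieldType) n (F G : {mpoly K[n]}) v : pev (F * G) v = pev F v * pev G v.
Proof. by rewrite /pev rmorphM. Qed.

Lemma pevD (K : fieldType) n (F G : {mpoly K[n]}) v : pev (F + G) v = pev F v + pev G v.
Proof. by rewrite /pev rmorphD. Qed.

Lemma pevZ (K : fieldType) n (x : K) (F : {mpoly K[n]}) v : pev (x *: F) v = x * pev F v.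
Proof. by rewrite /pev mevalZ. Qed.

Lemma pevC (K : fieldType) n (x : K) (v : 'cV[K]_n) : pev x%:MP v = x.
Proof. by rewrite /pev mevalC. Qed.

Lemma pullback_sum (K : fieldType) m k (A : 'M[K]_(m, k)) (I : Type) (r : seq I) (P : pred I)
  (F : I -> {mpoly K[m]}) :
  pullback (\sum_(i <- r | P i) F i) A = \sum_(i <- r | P i) pullback (F i) A.
Proof. by rewrite /pullback raddf_sum. Qed.

Lemma pullback_prodP (K : fieldType) m k (A : 'M[K]_(m, k)) (I : Type) (r : seq I) (P : pred I)
  (F : I -> {mpoly K[m]}) :
  pullback (\prod_(i <- r | P i) F i) A = \prod_(i <- r | P i) pullback (F i) A.
Proof.
have hm := comp_mpoly_is_multiplicative (linforms A).
exact: (big_morph _ hm.1 hm.2).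
Qed.

Lemma mderiv_sum (K : fieldType) n (I : Type) (r : seq I) (P : pred I)
  (F : I -> {mpoly K[n]}) i :
  (\sum_(x <- r | P x) F x)^`M(i) = \sum_(x <- r | P x) (F x)^`M(i).
Proof. exact: raddf_sum. Qed.

Lemma lf0 (K : fieldType) n : lf (fun _ : 'I_n => (0 : K)) = 0.
Proof. by rewrite /lf big1 // => k _; rewrite scale0r. Qed.

Lemma ev0 (K : fieldType) n (v : 'cV[K]_n) : ev (fun _ => 0) v = 0.
Proof. by rewrite /ev big1 // => k _; rewrite mul0r. Qed.

Lemma pullbackZ (K : fieldType) m k (A : 'M[K]_(m, k)) x (F : {mpoly K[m]}) :
  pullback (x *: F) A = x *: pullback F A.
Proof. by rewrite /pullback comp_mpolyZ. Qed.

Lemma prod_but (K : fieldType) n d (F : 'I_d -> {mpoly K[n]}) (G : {mpoly K[n]}) j :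
  (\prod_(j' | j' != j) F j') * G = \prod_j' (if j' == j then G else F j').
Proof.
rewrite [RHS](bigD1 j) //= eqxx mulrC; congr (_ * _).
by apply: eq_bigr => j' /negbTE ->.
Qed.

Section Univ.
Variables (K : fieldType) (n1 d N : nat).
Definition Tt := (option 'I_n1 + (Blk n1 d * 'I_d))%type.
Variables (h : Tt -> 'I_N.+1) (g : 'I_N.+1 -> Tt).
Hypotheses (hg : cancel h g) (gh : cancel g h).

Definition Y : {mpoly K[N.+1]} :=
  \sum_(b | ne b) \prod_(j < d) 'X_(h (inr (b, j))).

Definition pT (t : Tt) : K :=
  match t with inl None => 1 | inl (Some _) => 0 | inr (b, j) => (~~ b.1 j)%:R end.
Definition pv : 'cV[K]_N.+1 := \col_r pT (g r).

Lemma Y_homog : Y \is d.-homog.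
Proof.
apply: rpred_sum => b _; apply: prod_homog => j.
by rewrite dhomogX /= mdeg1.
Qed.

Lemma Y_pv : pev Y pv = 0.
Proof.
rewrite /pev /Y rmorph_sum big1 // => b nb.
rewrite rmorph_prod /=; case/existsP: nb => j bj.
by rewrite (bigD1 j) //= mevalXU mxE hg /= bj mul0r.
Qed.

Lemma pv_neq0 : pv != 0.
Proof.
apply/negP => /eqP /matrixP /(_ (h (inl None)) 0).
by rewrite !mxE hg /= => /eqP; rewrite oner_eq0.
Qed.

Lemma Y_neq0 (i0 : 'I_n1) : (0 < d)%N -> Y != 0.
Proof.
move=> hd.
pose bs : Blk n1 d := ([ffun _ => true], [ffun _ => i0]).
pose v (r : 'I_N.+1) : K :=
  match g r with inr (b, _) => (b == bs)%:R | _ => 0 end.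
apply/negP => /eqP Y0.
have : Y.@[v] = 1.
  rewrite /Y rmorph_sum (bigD1 bs) /=; last by apply/existsP; exists (Ordinal hd); rewrite ffunE.
  rewrite [X in _ + X]big1 ?addr0.
    rewrite rmorph_prod /=; apply: big1 => j _.
    by rewrite mevalXU /v hg eqxx.
  move=> b /andP[_ nb]; rewrite rmorph_prod /= (bigD1 (Ordinal hd)) //=.
  by rewrite mevalXU /v hg (negbTE nb) mul0r.
by rewrite Y0 meval0 => /eqP; rewrite eq_sym oner_eq0.
Qed.

Section WithQ.
Variables (q : 'cV[K]_n1) (c : 'I_n1).
Hypothesis hc : q c 0 != 0.
Variable a : Blk n1 d -> K.

Definition sc (b : Blk n1 d) (j : 'I_d) : K :=
  if [pick j' | b.1 j'] == Some j then a b else 1.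
Definition Lrow (b : Blk n1 d) (j : 'I_d) : 'I_n1 -> K :=
  if b.1 j then (fun k => sc b j * Zv q c (b.2 j) k) else Wv q c.
Definition Rrow (t : Tt) : 'I_n1 -> K :=
  match t with
  | inl None => Wv q c
  | inl (Some i) => Zv q c i
  | inr (b, j) => Lrow b j end.
Definition Am : 'M[K]_(N.+1, n1) := \matrix_(r, k) Rrow (g r) k.

Lemma pullback_Y : pullback Y Am = \sum_(b | ne b) \prod_j lf (Lrow b j).
Proof.
rewrite /Y.
have -> : forall (P : Blk n1 d -> {mpoly K[N.+1]}), pullback (\sum_(b | ne b) P b) Am = \sum_(b | ne b) pullback (P b) Am.
  by move=> P; rewrite /pullback raddf_sum.
apply: eq_bigr => b _; rewrite pullback_prod; apply: eq_bigr => j _.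
rewrite pullbackX.
by apply: lf_ext => k; rewrite mxE hg.
Qed.

Lemma pick_spec (b : Blk n1 d) : ne b -> exists j0, [pick j | b.1 j] = Some j0 /\ b.1 j0.
Proof.
case/existsP=> j bj; case: pickP => [j0 bj0|none]; first by exists j0.
by move: (none j); rewrite bj.
Qed.

Lemma prod_L b : ne b -> \prod_j lf (Lrow b j) = a b *: Pb q c b.
Proof.
move=> nb; have [j0 [pj bj0]] := pick_spec nb.
rewrite /Pb (bigD1 j0) // [in RHS](bigD1 j0) //= {1}/Lrow bj0 /sc pj eqxx lf_scale.
rewrite -scalerAl; congr (_ *: (_ * _)); apply: eq_bigr => j nj.
rewrite /Lrow /sc pj.
have -> : (Some j0 == Some j) = false by rewrite (inj_eq (@Some_inj _)) eq_sym (negbTE nj).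
by case: (b.1 j) => //; apply: lf_ext => k; rewrite mul1r.
Qed.

Lemma ev_Rrow t : ev (Rrow t) q = pT t.
Proof.
case: t => [[i|]|[b j]] /=; rewrite ?ev_Zv ?ev_Wv //.
rewrite /Lrow; case: (b.1 j) => /=; last exact: ev_Wv.
by rewrite (ev_scale (sc b j) (Zv q c (b.2 j))) (ev_Zv hc) mulr0.
Qed.

Lemma Aq : Am *m q = pv.
Proof.
apply/matrixP => r k; rewrite [k]ord1 !mxE -ev_Rrow.
by apply: eq_bigr => j _; rewrite mxE.
Qed.

Lemma sum_delta (T : finType) (t0 : T) (F : T -> K) :
  \sum_t (t == t0)%:R * F t = F t0.
Proof.
rewrite (bigD1 t0) //= eqxx mul1r big1 ?addr0 // => t /negbTE ->.
by rewrite mul0r.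
Qed.

Lemma rankA : \rank Am = n1.
Proof.
pose C : 'M[K]_(n1, N.+1) := \matrix_(i, r)
  ((g r == inl (Some i))%:R + q i 0 * (g r == inl None)%:R).
have CA : C *m Am = 1%:M.
  apply/matrixP => i k; rewrite !mxE.
  rewrite (reindex h); last by exists g => t _; rewrite ?hg ?gh.
  rewrite (eq_bigr (fun t => (t == inl (Some i))%:R * Rrow t k +
                            q i 0 * ((t == inl None)%:R * Rrow t k))); last first.
    by move=> t _; rewrite !mxE hg mulrDl mulrA.
  rewrite big_split /= -mulr_sumr !sum_delta /= /Zv /Wv eq_sym.
  ring.
apply/eqP; rewrite eqn_leq rank_leq_col /=.
by have := mxrankM_maxr C Am; rewrite CA mxrank1.
Qed.

Definition Pi (b : Blk n1 d) (j : 'I_d) : {mpoly K[n1]} :=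
  \prod_(j' | j' != j) lf (Lrow b j').

Lemma pev_Pi_zero b j : ne b -> ~~ b.1 j -> pev (Pi b j) q = 0.
Proof.
move=> nb bj; have [j0 [pj bj0]] := pick_spec nb.
have nj : j0 != j by apply/eqP => e; move: bj; rewrite -e bj0.
rewrite /Pi pev_prod (bigD1 j0) //= pev_lf.
by have := ev_Rrow (inr (b, j0)); rewrite /= => ->; rewrite bj0 mul0r.
Qed.

Lemma X_deriv i : (pullback Y Am)^`M(i) =
  \sum_(b | ne b) \sum_j (Lrow b j i)%:MP * Pi b j.
Proof.
rewrite pullback_Y mderiv_sum; apply: eq_bigr => b _.
by rewrite mderiv_prod; apply: eq_bigr => j _; rewrite mderiv_lf.
Qed.

Lemma deriv_sum (q' : 'cV[K]_n1) :
  \sum_i pev ((pullback Y Am)^`M(i)) q * q' i 0 =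
  \sum_(b | ne b) \sum_j ev (Lrow b j) q' * pev (Pi b j) q.
Proof.
under eq_bigr => i _ do rewrite X_deriv pev_sum mulr_suml.
rewrite exchange_big; apply: eq_bigr => b _.
under eq_bigr => i _ do rewrite pev_sum mulr_suml.
rewrite exchange_big; apply: eq_bigr => j _.
rewrite /ev mulr_suml; apply: eq_bigr => i _.
by rewrite pevM pevC mulrAC.
Qed.

Lemma dpullback_Y (B : 'M[K]_(N.+1, n1)) : dpullback Y Am B =
  \sum_(b | ne b) \sum_j Pi b j * lf (fun k => B (h (inr (b, j))) k).
Proof.
rewrite /dpullback.
under eq_bigr => r _ do rewrite /Y mderiv_sum pullback_sum mulr_suml.
rewrite exchange_big; apply: eq_bigr => b _.
under eq_bigr => r _ do rewrite mderiv_prod pullback_sum mulr_suml.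
rewrite exchange_big; apply: eq_bigr => j _.
rewrite (bigD1 (h (inr (b, j)))) //= [X in _ + X]big1 ?addr0.
  rewrite mderivXU eqxx mul_mpolyC scale1r pullback_prodP tnth_lin.
  congr (_ * _); apply: eq_bigr => j' _; rewrite pullbackX.
  by apply: lf_ext => k; rewrite mxE hg.
move=> r hr; rewrite mderivXU eq_sym (negbTE hr) mul_mpolyC scale0r.
by rewrite /pullback comp_mpoly0 mul0r.
Qed.

Lemma PiW_homog b j : Pi b j * lf (Wv q c) \is d.-homog.
Proof. by rewrite /Pi prod_but; apply: prod_homog => j'; case: ifP; rewrite lf_homog. Qed.

Lemma Pi_j0 (b : Blk n1 d) j0 : [pick j | b.1 j] = Some j0 -> b.1 j0 ->
  Pi b j0 * lf (Zv q c (b.2 j0)) = Pb q c b.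
Proof.
move=> pj bj0; rewrite /Pi prod_but /Pb; apply: eq_bigr => j _.
case: eqP => [->|/eqP nj]; first by rewrite bj0.
rewrite /Lrow /sc pj.
have -> : (Some j0 == Some j) = false by rewrite (inj_eq (@Some_inj _)) eq_sym (negbTE nj).
by case: (b.1 j) => //; apply: lf_ext => k; rewrite mul1r.
Qed.


Lemma dphi_ok (X : {mpoly K[n1]}) : pullback Y Am = X -> X != 0 ->
  dphi_surjective d pv Y Am q X.
Proof.
move=> hX X0 l mu _ hmu q' G' hG' hcond.
have mu1 : mu = 1.
  have : (mu - 1) *: X = 0 by rewrite scalerBl scale1r -hmu hX subrr.
  move/eqP; rewrite scaler_eq0 (negbTE X0) orbF subr_eq0.
  by move/eqP.
subst mu.
pose E := \sum_(b | ne b) \sum_(j | b.1 j)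
   ev (Lrow b j) q' *: (Pi b j * lf (Wv q c)).
have hR : G' + E \is d.-homog.
  apply: rpredD => //; apply: rpred_sum => b _; apply: rpred_sum => j _.
  by apply: rpredZ; exact: PiW_homog.
have hRq : pev (G' + E) q = 0.
  rewrite pevD pev_sum.
  have eG : pev G' q = - \sum_(b | ne b) \sum_j ev (Lrow b j) q' * pev (Pi b j) q.
    by rewrite -deriv_sum hX; apply/eqP; rewrite -addr_eq0 hcond.
  rewrite eG addrC -sumrB big1 // => b nb.
  rewrite pev_sum [X in _ - X](bigID (fun j => b.1 j)) /=.
  rewrite [X in _ - (_ + X)]big1 ?addr0; last first.
    by move=> j bj; rewrite pev_Pi_zero ?mulr0.
  rewrite -sumrB big1 // => j _.
  by rewrite pevZ pevM pev_lf (ev_Wv hc) mulr1 subrr.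
have [a' Ra'] := rep hc hR hRq.
pose Brow (t : Tt) : 'I_n1 -> K :=
  match t with
  | inl None => fun _ => 0
  | inl (Some i) => fun k => - ev (Zv q c i) q' * Wv q c k
  | inr (b, j) => if b.1 j then
       (fun k => - ev (Lrow b j) q' * Wv q c k +
          (if [pick j' | b.1 j'] == Some j then a' b else 0) * Zv q c (b.2 j) k)
     else (fun _ => 0) end.
pose Bm : 'M[K]_(N.+1, n1) := \matrix_(r, k) Brow (g r) k.
exists Bm, (ev (Wv q c) q'), 0; split.
  apply/matrixP => r k; rewrite [k]ord1.
  have eA : (Am *m q') r 0 = ev (Rrow (g r)) q'.
    by rewrite mxE; apply: eq_bigr => j _; rewrite mxE.
  have eB : (Bm *m q) r 0 = ev (Brow (g r)) q.
    by rewrite mxE; apply: eq_bigr => j _; rewrite mxE.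
  rewrite mxE eA eB !mxE.
  case: (g r) => [[i|]|[b j]] /=.
  - by rewrite (ev_scale _ (Wv q c)) (ev_Wv hc) mulr1 mulr0 addrN.
  - by rewrite ev0 addr0 mulr1.
  rewrite /Lrow; case: (b.1 j) => /=; last by rewrite ev0 addr0 mulr1.
  rewrite (ev_lin _ _ (Wv q c) (Zv q c (b.2 j))) (ev_Wv hc) (ev_Zv hc).
  by rewrite mulr0 addr0 mulr1 addrN mulr0.
rewrite scale0r add0r scale1r dpullback_Y.
rewrite (eq_bigr (fun b : Blk n1 d => - \sum_(j | b.1 j) ev (Lrow b j) q' *:
     (Pi b j * lf (Wv q c)) + a' b *: Pb q c b)).
  by rewrite big_split /= sumrN -Ra' -/E addrC addrK.
move=> b nb.
rewrite (bigID (fun j => b.1 j)) /= [X in _ + X]big1 ?addr0; last first.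
  move=> j bj; rewrite (lf_ext (sig := fun _ => 0)) ?lf0 ?mulr0 // => k.
  by rewrite mxE hg /= (negbTE bj).
rewrite (eq_bigr (fun j => (- ev (Lrow b j) q') *: (Pi b j * lf (Wv q c)) +
  (if [pick j' | b.1 j'] == Some j then a' b else 0) *: (Pi b j * lf (Zv q c (b.2 j))))); last first.
  move=> j bj.
  rewrite (lf_ext (sig := fun k => - ev (Lrow b j) q' * Wv q c k +
          (if [pick j' | b.1 j'] == Some j then a' b else 0) * Zv q c (b.2 j) k)); last first.
    by move=> k; rewrite mxE hg /= bj.
  by rewrite lf_lin mulrDr -!scalerAr.
rewrite big_split /=; congr (_ + _).
  by rewrite -sumrN; apply: eq_bigr => j _; rewrite scaleNr.
have [j0 [pj bj0]] := pick_spec nb.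
rewrite (bigD1 j0) //= pj eqxx big1 ?addr0; first by rewrite Pi_j0.
move=> j /andP[_ nj].
have -> : (Some j0 == Some j) = false by rewrite (inj_eq (@Some_inj _)) eq_sym (negbTE nj).
by rewrite scale0r.
Qed.

End WithQ.
End Univ.

Unset Implicit Arguments.
Set Strict Implicit.

Theorem lemma4p2 (K : closedFieldType) (hK : [pchar K] =i pred0)
    (n d : nat) (hn : (0 < n)%N) (hd : (0 < d)%N) :
  exists (N : nat) (p : 'cV[K]_N.+1) (Y : {mpoly K[N.+1]}),
    pointed_hypersurface d p Y /\
    (forall (q : 'cV[K]_n.+1) (X : {mpoly K[n.+1]}),
        pointed_hypersurface d q X ->
        exists A : 'M[K]_(N.+1, n.+1), is_param_section p Y A q X) /\
    (forall (q : 'cV[K]_n.+1) (X : {mpoly K[n.+1]}),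
        pointed_hypersurface d q X ->
        exists A : 'M[K]_(N.+1, n.+1),
          is_param_section p Y A q X /\ dphi_surjective d p Y A q X).
Proof.
have cT : (0 < #|{: Tt n.+1 d}|)%N by apply/card_gt0P; exists (inl None).
pose N := #|{: Tt n.+1 d}|.-1.
have eN : N.+1 = #|{: Tt n.+1 d}| by rewrite prednK.
pose h (t : Tt n.+1 d) : 'I_N.+1 := cast_ord (esym eN) (enum_rank t).
pose g (r : 'I_N.+1) : Tt n.+1 d := enum_val (cast_ord eN r).
have hg : cancel h g by move=> t; rewrite /g /h cast_ordKV enum_rankK.
have gh : cancel g h by move=> r; rewrite /g /h enum_valK cast_ordK.
exists N, (pv K g), (Y K h).
have P3 : forall (q : 'cV[K]_n.+1) (X : {mpoly K[n.+1]}),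
    pointed_hypersurface d q X ->
    exists A : 'M[K]_(N.+1, n.+1),
      is_param_section (pv K g) (Y K h) A q X /\
      dphi_surjective d (pv K g) (Y K h) A q X.
  move=> q X [q0 X0 hX Xq].
  have [c hc] : exists c, q c 0 != 0.
    case: (pickP (fun i => q i 0 != 0)) => [c hc|none]; first by exists c.
    case/negP: q0; apply/eqP/matrixP => i j; rewrite [j]ord1 mxE.
    by move: (none i) => /negbFE/eqP.
  have [a Xa] := rep hc hX Xq.
  have hpb : pullback (Y K h) (Am g q c a) = X.
    rewrite (pullback_Y hg) Xa; apply: eq_bigr => b nb; exact: prod_L.
  exists (Am g q c a); split; last exact: (dphi_ok hg hc hpb X0).
  split.
  - exact: rankA hg gh q c a.
  - by rewrite hpb.
  - by exists 1; rewrite ?oner_eq0 // scale1r; exact: Aq.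
  - by exists 1; rewrite ?oner_eq0 // hpb scale1r.
split; last split => //.
  split.
  - exact: pv_neq0 hg.
  - exact: Y_neq0 hg ord0 hd.
  - exact: Y_homog.
  - exact: Y_pv hg.
move=> q X hqX; have [A [HA _]] := P3 q X hqX; by exists A.
Qed.
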